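(* Let $\mathbb{X}\subset\mathbb{R}^m$ be compact and let $f:\mathbb{R}^m\to\mathbb{R}$ be continuous and positive homogeneous. Then for every $\epsilon>0$ there exists a finite-layer HomoMLP $\mathcal{A}'$ with ReLU activations, representing $F_{\mathcal{A}'}$, such that $|F_{\mathcal{A}'}(x)-f(x)|<\epsilon$ for all $x\in\mathbb{X}$.
   Context: A function $g$ is positive homogeneous iff $g(\lambda x)=\lambda g(x)$ for all $x$ and all $\lambda>0$. A HomoMLP is a multilayer perceptron without bias terms whose activation functions are positive homogeneous, i.e. $x\mapsto W_L\,\sigma(W_{L-1}\,\sigma(\cdots\sigma(W_1x)\cdots))$ with $\sigma$ applied coordinatewise (here $\sigma=\mathrm{ReLU}$). *)

(* Defs.v *)
From HB Require Import structures.
From mathcomp Require Import all_boot all_order all_algebra.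
From mathcomp Require Import all_classical all_reals all_analysis.
Set Implicit Arguments. Unset Strict Implicit. Unset Printing Implicit Defensive.
Import Order.TTheory GRing.Theory Num.Theory.
Import numFieldNormedType.Exports.
Local Open Scope ring_scope.

Definition pos_homogeneous (R : realType) (m : nat) (g : 'cV[R]_m -> R) : Prop :=
  forall (x : 'cV[R]_m) (l : R), 0 < l -> g (l *: x) = l * g x.

Definition relu (R : realType) (n : nat) (x : 'cV[R]_n) : 'cV[R]_n :=
  map_mx (fun a => Num.max a 0) x.

(* A bias-free ReLU MLP from R^n to R^k, with finitely many layers:
   HLin W          represents  x |-> W x  (the last linear layer W_L);
   HLayer W A      represents  x |-> A (relu (W x)). *)
Inductive homoMLP (R : realType) : nat -> nat -> Type :=
| HLin (n k : nat) of 'M[R]_(k, n) : homoMLP R n k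
| HLayer (n p k : nat) of 'M[R]_(p, n) & homoMLP R p k : homoMLP R n k.

Fixpoint eval_homoMLP (R : realType) (n k : nat) (A : homoMLP R n k)
  : 'cV[R]_n -> 'cV[R]_k :=
  match A in homoMLP _ n k return 'cV[R]_n -> 'cV[R]_k with
  | HLin _ _ W => fun x => W *m x
  | HLayer _ _ _ W B => fun x => eval_homoMLP B (relu (W *m x))
  end.

Definition F_homoMLP (R : realType) (m : nat) (A : homoMLP R m 1) (x : 'cV[R]_m) : R :=
  eval_homoMLP A x 0 0.

(* Main.v *)
Require Import Defs.
From HB Require Import structures.
From mathcomp Require Import all_boot all_order all_algebra.
From mathcomp Require Import all_classical all_reals all_analysis.
From mathcomp Require Import ring lra.
Import Order.TTheory GRing.Theory Num.Theory.
Import numFieldNormedType.Exports.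
Local Open Scope ring_scope.
Local Open Scope classical_set_scope.

Set Implicit Arguments. Unset Strict Implicit.
Section Net.
Variable R : realType.

Definition Rep (n k : nat) (g : 'cV[R]_n -> 'cV[R]_k) :=
  exists A : homoMLP R n k, forall x, eval_homoMLP A x = g x.

Fixpoint hsize (n k : nat) (A : homoMLP R n k) : nat :=
  match A with
  | HLin _ _ _ => 1%N
  | HLayer _ _ _ _ B => (hsize B).+1
  end.

Definition precomp (n k : nat) (A : homoMLP R n k) (q : nat) (M : 'M[R]_(n, q))
  : homoMLP R q k :=
  match A in homoMLP _ n k return 'M[R]_(n, q) -> homoMLP R q k with
  | HLin _ _ W => fun M => HLin (W *m M)
  | HLayer _ _ _ W B => fun M => HLayer (W *m M) B
  end M.

Lemma precompE n k (A : homoMLP R n k) q (M : 'M[R]_(n, q)) x :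
  eval_homoMLP (precomp A M) x = eval_homoMLP A (M *m x).
Proof. by case: A M => [n1 k1 W|n1 p1 k1 W B] M; rewrite /= mulmxA. Qed.

Lemma precomp_size n k (A : homoMLP R n k) q (M : 'M[R]_(n, q)) :
  hsize (precomp A M) = hsize A.
Proof. by case: A M. Qed.

Lemma relu_col p1 p2 (a : 'cV[R]_p1) (b : 'cV[R]_p2) :
  relu (col_mx a b) = col_mx (relu a) (relu b).
Proof. by rewrite /relu map_col_mx. Qed.

Lemma usub_mul p1 p2 (z : 'cV[R]_(p1 + p2)) :
  usubmx z = row_mx 1%:M 0 *m z.
Proof.
by rewrite -[z in RHS](vsubmxK z) mul_row_col mul1mx mul0mx addr0.
Qed.

Lemma dsub_mul p1 p2 (z : 'cV[R]_(p1 + p2)) :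
  dsubmx z = row_mx 0 1%:M *m z.
Proof.
by rewrite -[z in RHS](vsubmxK z) mul_row_col mul1mx mul0mx add0r.
Qed.

Lemma pad_lin n k (W : 'M[R]_(k, n)) x :
  W *m x = row_mx 1%:M (- 1%:M) *m relu (col_mx W (- W) *m x).
Proof.
rewrite mul_col_mx relu_col mul_row_col mul1mx mulNmx mul1mx mulNmx.
move: (W *m x) => y; apply/matrixP => i j; rewrite !mxE.
case: (lerP 0 (y i j)) => h.
  by rewrite (max_idPr _) ?subr0 // oppr_le0.
by rewrite (max_idPl _) ?sub0r ?opprK // oppr_ge0 ltW.
Qed.

Lemma hsize_neq0 n k (A : homoMLP R n k) : hsize A != 0%N.
Proof. by case: A. Qed.

Lemma pair_rep_aux d : forall n k1 k2 (A1 : homoMLP R n k1) (A2 : homoMLP R n k2),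
  (hsize A1 + hsize A2 <= d)%N ->
  Rep (fun x => col_mx (eval_homoMLP A1 x) (eval_homoMLP A2 x)).
Proof.
elim: d => [|d IH] n k1 k2 A1 A2.
  by rewrite leqn0 addn_eq0 (negbTE (hsize_neq0 A1)).
move: n k1 k2 A1 A2.
have layer : forall n k1 k2 p1 p2 (W1 : 'M[R]_(p1, n)) (W2 : 'M[R]_(p2, n))
   (B1 : homoMLP R p1 k1) (B2 : homoMLP R p2 k2),
   (hsize B1 + hsize B2 <= d)%N ->
   Rep (fun x => col_mx (eval_homoMLP B1 (relu (W1 *m x)))
                        (eval_homoMLP B2 (relu (W2 *m x)))).
  move=> n k1 k2 p1 p2 W1 W2 B1 B2 hs.
  pose P1 : 'M[R]_(p1, p1 + p2) := row_mx 1%:M 0.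
  pose P2 : 'M[R]_(p2, p1 + p2) := row_mx 0 1%:M.
  have := IH _ _ _ (precomp B1 P1) (precomp B2 P2).
  rewrite !precomp_size => /(_ hs) [C HC].
  exists (HLayer (col_mx W1 W2) C) => x /=.
  by rewrite HC !precompE mul_col_mx relu_col -usub_mul -dsub_mul col_mxKu col_mxKd.
move=> n k1 k2 A1 A2.
case: A1 A2 => [n0 k0 W1|n0 p1 k0 W1 B1] A2.
  case: A2 W1 => [? ? W2|? p2 ? W2 B2] W1 /= hs.
- by exists (HLin (col_mx W1 W2)) => x /=; rewrite mul_col_mx.
- have := layer _ _ _ _ _ (col_mx W1 (- W1)) W2 (HLin (row_mx 1%:M (- 1%:M))) B2.
  move: hs; rewrite /= addSn ltnS => hs /(_ hs) [C HC].
  by exists C => x; rewrite HC /= -pad_lin.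
case: A2 W1 B1 => [? ? W2|? p2 ? W2 B2] W1 B1 /= hs.
- have := layer _ _ _ _ _ W1 (col_mx W2 (- W2)) B1 (HLin (row_mx 1%:M (- 1%:M))).
  move: hs; rewrite /= !addn1 ltnS => hs /(_ hs) [C HC].
  by exists C => x; rewrite HC /= -pad_lin.
- have := layer _ _ _ _ _ W1 W2 B1 B2.
  move: hs; rewrite addSn addnS ltnS => /ltnW hs /(_ hs) [C HC].
  by exists C.
Qed.

Lemma pair_rep n k1 k2 (g1 : 'cV[R]_n -> 'cV[R]_k1) (g2 : 'cV[R]_n -> 'cV[R]_k2) :
  Rep g1 -> Rep g2 -> Rep (fun x => col_mx (g1 x) (g2 x)).
Proof.
move=> [A1 H1] [A2 H2].
have [C HC] := pair_rep_aux (leqnn (hsize A1 + hsize A2)).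
by exists C => x; rewrite HC H1 H2.
Qed.

Fixpoint postlin (n k : nat) (A : homoMLP R n k) (q : nat) (M : 'M[R]_(q, k))
  : homoMLP R n q :=
  match A in homoMLP _ n k return 'M[R]_(q, k) -> homoMLP R n q with
  | HLin _ _ W => fun M => HLin (M *m W)
  | HLayer _ _ _ W B => fun M => HLayer W (postlin B M)
  end M.

Lemma postlinE n k (A : homoMLP R n k) q (M : 'M[R]_(q, k)) x :
  eval_homoMLP (postlin A M) x = M *m eval_homoMLP A x.
Proof. by elim: A q M x => [? ? W|? ? ? W B IH] q M x /=; rewrite ?mulmxA ?IH. Qed.

Fixpoint postrelu (n k : nat) (A : homoMLP R n k) : homoMLP R n k :=
  match A with
  | HLin _ _ W => HLayer W (HLin 1%:M)
  | HLayer _ _ _ W B => HLayer W (postrelu B)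
  end.

Lemma postreluE n k (A : homoMLP R n k) x :
  eval_homoMLP (postrelu A) x = relu (eval_homoMLP A x).
Proof. by elim: A x => [? ? W|? ? ? W B IH] x /=; rewrite ?mul1mx ?IH. Qed.

Definition L m (g : 'cV[R]_m -> R) := Rep (fun x => const_mx (g x) : 'cV[R]_1).

Lemma L_F m (g : 'cV[R]_m -> R) : L g -> exists A, forall x, F_homoMLP A x = g x.
Proof. by move=> [A HA]; exists A => x; rewrite /F_homoMLP HA mxE. Qed.

Lemma L_lin m (u : 'rV[R]_m) : L (fun x => (u *m x) 0 0).
Proof.
exists (HLin u) => x /=; apply/matrixP => i j.
by rewrite !mxE !ord1.
Qed.

Lemma L_add m (g1 g2 : 'cV[R]_m -> R) : L g1 -> L g2 -> L (fun x => g1 x + g2 x).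
Proof.
move=> h1 h2; have [A HA] := pair_rep h1 h2.
exists (postlin A (row_mx 1%:M 1%:M)) => x.
rewrite postlinE HA mul_row_col !mul1mx.
by apply/matrixP => i j; rewrite !mxE.
Qed.

Lemma L_scale m c (g : 'cV[R]_m -> R) : L g -> L (fun x => c * g x).
Proof.
move=> [A HA]; exists (postlin A c%:M) => x.
rewrite postlinE HA mul_scalar_mx.
by apply/matrixP => i j; rewrite !mxE.
Qed.

Lemma L_relu m (g : 'cV[R]_m -> R) : L g -> L (fun x => Num.max (g x) 0).
Proof.
move=> [A HA]; exists (postrelu A) => x.
rewrite postreluE HA.
by apply/matrixP => i j; rewrite !mxE.
Qed.

End Net.



Section Main.
Variable R : realType.
Variable m : nat.

Definition Lc (g : 'cV[R]_m -> R) := L g /\ continuous g.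

Lemma Lc_ext g g' : Lc g -> (forall z, g z = g' z) -> Lc g'.
Proof. by move=> h e; have -> : g' = g by apply/funext => z; rewrite e. Qed.

Definition dot (b z : 'cV[R]_m) : R := \sum_i b i 0 * z i 0.

Lemma cont_sum (s : seq 'I_m) (b : 'I_m -> R) :
  continuous (fun z : 'cV[R]_m => \sum_(i <- s) b i * z i 0).
Proof.
elim: s => [|i s IH].
  under eq_fun => x do rewrite big_nil.
  exact: cst_continuous.
pose f1 : 'cV[R]_m -> R := fun z => b i * z i 0.
pose f2 : 'cV[R]_m -> R := fun z => \sum_(j <- s) b j * z j 0.
have -> : (fun z : 'cV[R]_m => \sum_(j <- i :: s) b j * z j 0) = f1 + f2.
  by apply/funext => x; rewrite big_cons.
move=> z; apply: continuousD; last exact: IH.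
apply: continuousM; first exact: cst_continuous.
exact: coord_continuous.
Qed.

Lemma Lc_dot b : Lc (dot b).
Proof.
split; last exact: cont_sum.
have [A HA] := @L_lin R m b^T.
exists A => x; rewrite HA; congr const_mx.
by rewrite /dot mxE; apply: eq_bigr => i _; rewrite mxE.
Qed.

Lemma Lc_add (g1 g2 : 'cV[R]_m -> R) : Lc g1 -> Lc g2 -> Lc (fun x => g1 x + g2 x).
Proof.
move=> [l1 c1] [l2 c2]; split; first exact: L_add.
by move=> z; apply: (continuousD (c1 z) (c2 z)).
Qed.

Lemma Lc_scale c (g : 'cV[R]_m -> R) : Lc g -> Lc (fun x => c * g x).
Proof.
move=> [l1 c1]; split; first exact: L_scale.
move=> z; apply: (@continuousM R _ (fun _ => c) g z) => //.
  exact: cst_continuous. exact: c1.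
Qed.

Lemma Lc_relu (g : 'cV[R]_m -> R) : Lc g -> Lc (fun x => Num.max (g x) 0).
Proof.
move=> [l1 c1]; split; first exact: L_relu.
move=> z; apply: (@continuous_max R _ g (fun _ => 0) z) => //.
  exact: c1. exact: cst_continuous.
Qed.

Lemma max_eq (a b : R) : a + Num.max (- 1 * a + b) 0 = Num.max a b.
Proof.
rewrite mulN1r; case: (lerP a b) => h.
  by rewrite max_l; lra.
by rewrite max_r; lra.
Qed.

Lemma min_eq (a b : R) : a + - 1 * Num.max (a + - 1 * b) 0 = Num.min a b.
Proof.
rewrite !mulN1r; case: (lerP a b) => h.
  by rewrite max_r; lra.
by rewrite max_l; lra.
Qed.

Lemma Lc_max (g1 g2 : 'cV[R]_m -> R) : Lc g1 -> Lc g2 -> Lc (fun x => Num.max (g1 x) (g2 x)).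
Proof.
move=> h1 h2.
apply: (@Lc_ext (fun x => g1 x + Num.max (- 1 * g1 x + g2 x) 0)).
  by apply: Lc_add => //; apply: Lc_relu; apply: Lc_add => //; apply: Lc_scale.
move=> z; exact: max_eq.
Qed.

Lemma Lc_min (g1 g2 : 'cV[R]_m -> R) : Lc g1 -> Lc g2 -> Lc (fun x => Num.min (g1 x) (g2 x)).
Proof.
move=> h1 h2.
apply: (@Lc_ext (fun x => g1 x + - 1 * Num.max (g1 x + - 1 * g2 x) 0)).
  by apply: Lc_add => //; apply: Lc_scale; apply: Lc_relu; apply: Lc_add => //; apply: Lc_scale.
move=> z; exact: min_eq.
Qed.

Lemma dotC b z : dot b z = dot z b.
Proof. by apply: eq_bigr => i _; rewrite mulrC. Qed.

Lemma dotZr b c z : dot b (c *: z) = c * dot b z.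
Proof. rewrite /dot mulr_sumr; apply: eq_bigr => i _; rewrite mxE; ring. Qed.

Lemma dotZl b c z : dot (c *: b) z = c * dot b z.
Proof. by rewrite dotC dotZr dotC. Qed.

Lemma dotBr b y z : dot b (y - z) = dot b y - dot b z.
Proof. rewrite /dot -sumrB; apply: eq_bigr => i _; rewrite !mxE; ring. Qed.

Lemma dotBl b y z : dot (y - z) b = dot y b - dot z b.
Proof. by rewrite dotC dotBr dotC (dotC b). Qed.

Lemma dot0 z : dot 0 z = 0.
Proof. by rewrite /dot big1 // => i _; rewrite mxE mul0r. Qed.

Lemma dot_ge0_aux (z : 'cV[R]_m) i : 0 <= z i 0 * z i 0.
Proof. by rewrite -expr2 sqr_ge0. Qed.

Lemma dot_ge0 z : 0 <= dot z z.
Proof. by apply: sumr_ge0 => i _; rewrite -expr2 sqr_ge0. Qed.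

Lemma dot_eq0 z : dot z z = 0 -> z = 0.
Proof.
move=> h; have := psumr_eq0P (fun i _ => dot_ge0_aux z i) h.
move=> H; apply/matrixP => i j; rewrite ord1 mxE.
by have /eqP := H i isT; rewrite mulf_eq0 orbb => /eqP.
Qed.

End Main.

Section Interp.
Variable R : realType.
Variable m : nat.
Variable f : 'cV[R]_m -> R.
Hypothesis hom : pos_homogeneous f.

Lemma f0 : f 0 = 0.
Proof.
have := hom 0 (ltr0n R 2); rewrite scaler0 => h; lra.
Qed.

Definition G (b : 'cV[R]_m) (z : 'cV[R]_m) : R :=
  (f b / dot b b) * Num.max (dot b z) 0 + (f (- b) / dot b b) * Num.max (- 1 * dot b z) 0.

Lemma Lc_G b : Lc (G b).
Proof.
apply: Lc_add; apply: Lc_scale; apply: Lc_relu; last apply: Lc_scale; exact: Lc_dot.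
Qed.

Lemma G_line b c : G b (c *: b) = f (c *: b).
Proof.
have [->|bn0] := eqVneq b 0.
  by rewrite scaler0 /G !dot0 f0 mulr0 maxxx !mulr0 addr0.
have bb0 : 0 < dot b b.
  rewrite lt_def dot_ge0 andbT; apply/eqP => /dot_eq0 h; by rewrite h eqxx in bn0.
rewrite /G dotZr.
case: (ltgtP c 0) => hc.
- have -> : c *: b = (- c) *: (- b) by rewrite scaleNr scalerN opprK.
  have h1 : c * dot b b <= 0 by rewrite pmulr_lle0 // ltW.
  have h2 : 0 <= -1 * (c * dot b b) by lra.
  rewrite hom ?oppr_gt0 // (max_r h1) (max_l h2).
  field; exact: lt0r_neq0.
- have h1 : 0 <= c * dot b b by rewrite pmulr_lge0 // ltW.
  have h2 : -1 * (c * dot b b) <= 0 by lra.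
  rewrite hom // (max_l h1) (max_r h2).
  field; exact: lt0r_neq0.
- by rewrite hc scale0r f0 mul0r maxxx !mulr0 ?mulN1r ?oppr0 ?maxxx ?mulr0 ?addr0.
Qed.

Lemma interp x y : exists g, Lc g /\ g x = f x /\ g y = f y.
Proof.
have [D0|Dn0] := eqVneq (dot x x * dot y y - dot x y * dot x y) 0.
  have [xx0|xxn0] := eqVneq (dot x x) 0.
    have x0 : x = 0 := dot_eq0 xx0.
    exists (G y); split; first exact: Lc_G.
    split; first by have := G_line y 0; rewrite scale0r x0.
    by have := G_line y 1; rewrite scale1r.
  pose c := dot x y / dot x x.
  have yc : y = c *: x.
    apply/eqP; rewrite -subr_eq0; apply/eqP; apply: dot_eq0.
    rewrite !(dotBl, dotBr, dotZl, dotZr) (dotC y x).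
    have -> : dot y y - c * dot x y - c * (dot x y - c * dot x x) =
       (dot x x * dot y y - dot x y * dot x y) / dot x x by rewrite /c; field.
    by rewrite D0 mul0r.
  exists (G x); split; first exact: Lc_G.
  split; first by have := G_line x 1; rewrite scale1r.
  by rewrite yc G_line.
pose D := dot x x * dot y y - dot x y * dot x y.
pose a := (f x * dot y y - f y * dot x y) / D.
pose b := (f y * dot x x - f x * dot x y) / D.
exists (fun z => a * dot x z + b * dot y z); split.
  by apply: Lc_add; apply: Lc_scale; apply: Lc_dot.
rewrite (dotC y x) /a /b; split; rewrite /D; field; exact: Dn0.
Qed.

End Interp.

Section Approx.
Variable R : realType.
Variable m : nat.
Variable f : 'cV[R]_m -> R.
Hypothesis hom : pos_homogeneous f.
Hypothesis cf : continuous f.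
Variable X : set 'cV[R]_m.
Hypothesis cX : compact X.
Variable eps : R.
Hypothesis he : 0 < eps.

Lemma open_sub (g : 'cV[R]_m -> R) : continuous g ->
  open [set z | g z - f z < eps].
Proof.
move=> cg.
have -> : [set z | g z - f z < eps] = (g - f) @^-1` [set t | t < eps] by [].
apply: open_comp; last exact: open_lt.
by move=> z _; apply: continuousB; [exact: cg | exact: cf].
Qed.

Lemma open_sub' (g : 'cV[R]_m -> R) : continuous g ->
  open [set z | f z - g z < eps].
Proof.
move=> cg.
have -> : [set z | f z - g z < eps] = (f - g) @^-1` [set t | t < eps] by [].
apply: open_comp; last exact: open_lt.
by move=> z _; apply: continuousB; [exact: cf | exact: cg].
Qed.

Lemma step1 x : exists g, Lc g /\ g x = f x /\ (forall z, X z -> g z < f z + eps).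
Proof.
have [h hh] := choice (fun y => interp hom x y).
have cX' := cX; rewrite compact_cover in cX'.
have [y Xy|z Xz|D' _ cov] := cX' _ X (fun y => [set z | h y z - f z < eps]).
- exact: open_sub (hh y).1.2.
- by exists z => //=; rewrite (hh z).2.2 subrr.
pose G (s : seq 'cV[R]_m) z := foldr (fun y acc => Num.min (h y z) acc) (h x z) s.
have HG : forall s, Lc (G s) /\ G s x = f x /\ forall y z, y \in s -> G s z <= h y z.
  elim => [|y s [IH1 [IH2 IH3]]].
    by split; [exact: (hh x).1 | split; [exact: (hh x).2.1 | by []]].
  split; first exact: (Lc_min (hh y).1 IH1).
  split; first by rewrite /= IH2 (hh y).2.1 minxx.
  move=> y' z; rewrite inE => /orP [/eqP ->|ys].
    by rewrite /= ge_min lexx.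
  by rewrite /= ge_min (IH3 _ _ ys) orbT.
have [HG1 [HG2 HG3]] := HG (finmap.enum_fset D').
exists (G (finmap.enum_fset D')); split => //; split => // z Xz.
have [y /= yD hy] := cov z Xz.
have := HG3 y z yD; lra.
Qed.

Lemma step2 : exists g, Lc g /\ (forall z, X z -> `|g z - f z| < eps).
Proof.
have [k hk] := choice step1.
have cX' := cX; rewrite compact_cover in cX'.
have [y Xy|z Xz|D' _ cov] := cX' _ X (fun y => [set z | f z - k y z < eps]).
- exact: open_sub' (hk y).1.2.
- by exists z => //=; rewrite (hk z).2.1 subrr.
pose H (s : seq 'cV[R]_m) z := foldr (fun y acc => Num.max (k y z) acc) (k 0 z) s.
have HH : forall s, Lc (H s) /\ (forall z, X z -> H s z < f z + eps) /\
    forall y z, y \in s -> k y z <= H s z.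
  elim => [|y s [IH1 [IH2 IH3]]].
    by split; [exact: (hk 0).1 | split; [exact: (hk 0).2.2 | by []]].
  split; first exact: (Lc_max (hk y).1 IH1).
  split.
    by move=> z Xz; rewrite /= gt_max (hk y).2.2 // IH2.
  move=> y' z; rewrite inE => /orP [/eqP ->|ys].
    by rewrite /= le_max lexx.
  by rewrite /= le_max (IH3 _ _ ys) orbT.
have [HH1 [HH2 HH3]] := HH (finmap.enum_fset D').
exists (H (finmap.enum_fset D')); split => // z Xz.
have [y /= yD hy] := cov z Xz.
have := HH3 y z yD; have := HH2 z Xz.
rewrite ltr_norml; move=> h1 h2; apply/andP; split; lra.
Qed.

End Approx.

Unset Implicit Arguments.

Theorem mainTheorem6 (R : realType) (m : nat) (X : set 'cV[R]_m)
  (f : 'cV[R]_m -> R) :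
  compact X -> continuous f -> pos_homogeneous f ->
  forall eps : R, 0 < eps ->
  exists A : homoMLP R m 1, forall x, X x -> `|F_homoMLP A x - f x| < eps.
Proof.
move=> cX cf hom eps he.
have [g [[Lg _] hg]] := step2 hom cf cX he.
have [A HA] := L_F Lg.
by exists A => x Xx; rewrite HA; exact: hg.
Qed.
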